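(* Let $n,d\in\mathbb{N}$. Let $\tilde Z=(\tilde Z_{j,k})_{j\in\{0,1\},k\in[n]}$ be a $2\times n$ array of i.i.d. random vectors, each uniformly distributed on $\{0,1\}^d$ (i.e. with i.i.d. $\mathrm{Ber}(1/2)$ coordinates), let $U=(U_1,\dots,U_n)$ be uniform on $\{0,1\}^n$ and independent of $\tilde Z$, and let $S_n=(Z_1,\dots,Z_n)$ with $Z_k=\tilde Z_{U_k,k}$. Call $i\in[d]$ a bad coordinate if $Z_k(i)=0$ for all $k\in[n]$, and let $B\in\{0,1\}^d$ be given by $B(i)=1$ iff $i$ is a bad coordinate, with $\|B\|_0$ the number of bad coordinates. Then $$H(U\mid B,\tilde Z)\le n\,\mathbb{E}\big[2^{-\|B\|_0}\big],$$ where entropy is measured in bits.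
   Context: $H(\cdot\mid\cdot)$ denotes conditional Shannon entropy (base-2 logarithm, so that $H(U)=n$). *)

(* Defs.v *)
From HB Require Import structures.
From mathcomp Require Import all_boot all_order all_algebra.
From mathcomp Require Import reals exp.
Set Implicit Arguments. Unset Strict Implicit. Unset Printing Implicit Defensive.
Import Order.TTheory GRing.Theory Num.Theory.
Local Open Scope ring_scope.

Definition log2 {R : realType} (x : R) : R := ln x / ln 2.

Definition unif_prob {R : realType} {Om : finType} (A : {set Om}) : R :=
  #|A|%:R / #|Om|%:R.

Definition unif_expect {R : realType} {Om : finType} (f : Om -> R) : R :=
  \sum_(w : Om) f w / #|Om|%:R.

(* Conditional Shannon entropy (bits) H(X | Y) of random variables X, Y
   defined on the uniform finite probability space Om:
   H(X|Y) = sum_{x,y} P(X=x,Y=y) log2 (P(Y=y) / P(X=x,Y=y))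
          = E[ log2 (P(Y = Y w) / P(X = X w, Y = Y w)) ]. *)
Definition cond_entropy {R : realType} {Om : finType} {TX TY : eqType}
    (X : Om -> TX) (Y : Om -> TY) : R :=
  unif_expect (fun w =>
    log2 (unif_prob [set w' | Y w' == Y w] /
          unif_prob [set w' | (X w' == X w) && (Y w' == Y w)])).

(* The sample space: (U, Ztilde), with U uniform on {0,1}^n and
   Ztilde = (Ztilde_{j,k})_{j in {0,1}, k in [n]} i.i.d. uniform on {0,1}^d,
   independent of U.  The uniform measure on this product type is exactly
   this joint law. *)
Definition Omega (n d : nat) : finType :=
  ({ffun 'I_n -> bool} * {ffun bool * 'I_n -> {ffun 'I_d -> bool}})%type.

Definition Uv {n d} (w : Omega n d) : {ffun 'I_n -> bool} := w.1.
Definition Zt {n d} (w : Omega n d) : {ffun bool * 'I_n -> {ffun 'I_d -> bool}} := w.2.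

Definition Zk {n d} (w : Omega n d) (k : 'I_n) : {ffun 'I_d -> bool} :=
  Zt w (Uv w k, k).

Definition Bv {n d} (w : Omega n d) : {ffun 'I_d -> bool} :=
  [ffun i => [forall k : 'I_n, ~~ Zk w k i]].

Definition norm0 {d} (b : {ffun 'I_d -> bool}) : nat := #|[set i | b i]|.

(* Main.v *)
Require Import Defs.
From HB Require Import structures.
From mathcomp Require Import all_boot all_order all_algebra.
From mathcomp Require Import reals exp.
Import Order.TTheory GRing.Theory Num.Theory.
Local Open Scope ring_scope.

Lemma card_fam (T:finType) (F : T -> pred bool) :
  #|[pred f : {ffun T -> bool} | [forall x, f x \in F x]]| = \prod_x #|F x|.
Proof.
transitivity #|(family F : simpl_pred {ffun T -> bool})|.
  by apply: eq_card => f; rewrite !inE.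
by rewrite card_family foldrE big_map big_enum.
Qed.

Lemma card_imp (c a : bool) : #|[pred y : bool | c ==> (y == a)]| = if c then 1%N else 2%N.
Proof.
case: c; case: a => /=.
- by rewrite -(card1 true); apply: eq_card => y; rewrite !inE.
- by rewrite -(card1 false); apply: eq_card => y; rewrite !inE.
- by rewrite -card_bool; apply: eq_card => y; rewrite !inE.
- by rewrite -card_bool; apply: eq_card => y; rewrite !inE.
Qed.

Section Main.
Variables (R : realType) (n d : nat).
Notation Om := (Omega n d).

Definition ind (k : 'I_n) (w : Om) : bool :=
  [forall i, Bv w i ==> ~~ Zt w (~~ Uv w k, k) i].

Definition phi (k : 'I_n) (g : {ffun 'I_d -> bool}) (w : Om) : Om :=
  (Uv w, [ffun p => if p == (~~ Uv w k, k) then [ffun i => Zt w p i (+) g i]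
                    else Zt w p]).

Lemma phiK k g : involutive (phi k g).
Proof.
move=> w; rewrite /phi /=; case: w => u z /=; congr pair; apply/ffunP => p.
rewrite !ffunE; case: eqP => // ->; apply/ffunP => i; rewrite !ffunE /=.
by rewrite -addbA addbb addbF.
Qed.

Lemma Bv_phi k g w : Bv (phi k g w) = Bv w.
Proof.
apply/ffunP => i; rewrite !ffunE; apply: eq_forallb => k'.
rewrite /Zk /= ffunE; case: eqP => // -[h hk]; subst k'.
by move: h; case: (Uv w k).
Qed.

Lemma ind_phi k g w : ind k (phi k g w) =
  [forall i, Bv w i ==> ~~ (Zt w (~~ Uv w k, k) i (+) g i)].
Proof. by rewrite /ind Bv_phi /= ffunE eqxx; apply/eq_forallb => i; rewrite !ffunE. Qed.


Lemma card_phi k w :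
  #|[pred g : {ffun 'I_d -> bool} | ind k (phi k g w)]| =
  (\prod_(i : 'I_d) (if Bv w i then 1 else 2))%N.
Proof.
rewrite (eq_bigr (fun i => #|[pred y : bool | Bv w i ==> (y == Zt w (~~ Uv w k, k) i)]|)); last by move=> i _; rewrite card_imp.
rewrite -card_fam; apply: eq_card => g; rewrite !inE ind_phi.
apply: eq_forallb => i; rewrite !inE.
by case: (Bv w i); case: (g i); case: (Zt w _ i).
Qed.



Lemma prod_half (b : {ffun 'I_d -> bool}) :
  (\prod_(i : 'I_d) (if b i then 1 else 2)%N)%:R = (2 ^ d)%:R * (2%:R^-1) ^+ norm0 b :> R.
Proof.
rewrite natr_prod.
have -> : \prod_(i : 'I_d) ((if b i then 1 else 2)%N)%:R =
          \prod_(i : 'I_d) (2%:R * (if b i then 2%:R^-1 else 1)) :> R.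
  apply: eq_bigr => i _; case: (b i) => /=; last by rewrite mulr1.
  by rewrite divff // pnatr_eq0.
rewrite big_split /= prodr_const card_ord natrX; congr (_ * _).
rewrite -big_mkcond /= /norm0 -prodr_const.
by apply: eq_bigl => i; rewrite inE.
Qed.

Lemma sum_ind k : \sum_(w : Om) ((ind k w)%:R : R) = \sum_(w : Om) (2%:R^-1) ^+ norm0 (Bv w).
Proof.
have h2d : (2 ^ d)%:R != 0 :> R by rewrite pnatr_eq0 expn_eq0.
apply: (mulIf h2d).
transitivity (\sum_(g : {ffun 'I_d -> bool}) \sum_(w : Om) ((ind k (phi k g w))%:R : R)).
  rewrite [RHS](eq_bigr (fun _ => \sum_(w : Om) ((ind k w)%:R : R))); last first.
    by move=> g _; rewrite [RHS](reindex_inj (inv_inj (phiK k g))).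
  by rewrite [RHS]sumr_const card_ffun card_bool card_ord mulr_natr.
rewrite exchange_big mulr_suml; apply: eq_bigr => w _.
rewrite mulrC -prod_half -(card_phi k) -sum1_card natr_sum [RHS]big_mkcond /=.
by apply: eq_bigr => g _; rewrite inE; case: ind.
Qed.


Lemma ratio (w : Om) :
  unif_prob [set w' : Om | (Bv w', Zt w') == (Bv w, Zt w)] /
  unif_prob [set w' : Om | (Uv w' == Uv w) && ((Bv w', Zt w') == (Bv w, Zt w))]
  = #|[set w' : Om | (Bv w', Zt w') == (Bv w, Zt w)]|%:R :> R.
Proof.
have -> : [set w' : Om | (Uv w' == Uv w) && ((Bv w', Zt w') == (Bv w, Zt w))] = [set w].
  apply/setP => w'; rewrite !inE; apply/idP/eqP; last by move ->; rewrite !eqxx.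
  case/andP => /eqP hu /eqP [_ hz]; move: w' w hu hz.
  by move=> [u z] [u' z'] /= -> ->.
have hc : #|Om|%:R != 0 :> R.
  by rewrite pnatr_eq0 -lt0n; apply/card_gt0P; exists w.
by rewrite /unif_prob cards1 div1r invrK mulfVK.
Qed.

Lemma Nbound (w : Om) :
  (#|[set w' : Om | (Bv w', Zt w') == (Bv w, Zt w)]| <= 2 ^ #|[set k | ind k w]|)%N.
Proof.
set A := [set w' : Om | _].
have inj : {in A &, injective (fun w' : Om => Uv w')}.
  move=> [u1 z1] [u2 z2]; rewrite !inE => /eqP[_ h1] /eqP[_ h2] /= hu.
  by rewrite /Zt /= in h1 h2; rewrite hu h1 h2.
rewrite -(card_in_imset inj).
apply: (leq_trans (subset_leq_card (_ : _ \subset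
   [pred u : {ffun 'I_n -> bool} | [forall k, u k \in [pred y : bool | ~~ ind k w ==> (y == Uv w k)]]]))).
  apply/subsetP => _ /imsetP [w' hw' ->]; rewrite inE; apply/forallP => k; rewrite inE.
  apply/implyP => hk.
  rewrite inE in hw'; case/eqP: hw' => hB hZ.
  case: eqP => // hne; exfalso; move/negP: hk; apply; apply/forallP => i; apply/implyP.
  rewrite -hB ffunE => /forallP /(_ k); rewrite /Zk hZ.
  have -> : Uv w' k = ~~ Uv w k by move: hne; case: (Uv w' k); case: (Uv w k).
  done.
rewrite card_fam (eq_bigr (fun k => if ~~ ind k w then 1%N else 2%N)); last first.
  by move=> k _; rewrite card_imp.
rewrite (bigID (fun k => ind k w)) /= [X in _ * X]big1; last by move=> k ->.
rewrite mulr1 (eq_bigr (fun _ => 2%N)); last by move=> k ->.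
by rewrite prod_nat_const cardsE.
Qed.

Lemma log_bound (N m : nat) : (0 < N)%N -> (N <= 2 ^ m)%N -> log2 (N%:R : R) <= m%:R.
Proof.
move=> N0 Nm.
have l2 : 0 < ln (2%:R : R) by apply: ln_gt0; rewrite ltr1n.
rewrite /log2 ler_pdivrMr // mulr_natl -lnXn ?ltr0n //.
by rewrite ler_ln ?posrE ?ltr0n ?exprn_gt0 ?ltr0n // -natrX ler_nat.
Qed.

Lemma sum_ind_card (w : Om) : \sum_k ((ind k w)%:R : R) = #|[set k | ind k w]|%:R.
Proof.
rewrite -sum1_card natr_sum [RHS]big_mkcond /=.
by apply: eq_bigr => k _; rewrite inE; case: ind.
Qed.

End Main.

Theorem lemmaC3 (R : realType) (n d : nat) :
  cond_entropy (R := R) (@Uv n d) (fun w : Omega n d => (Bv w, Zt w))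
  <= n%:R * unif_expect (fun w : Omega n d => (2%:R ^-1) ^+ norm0 (Bv w)).
Proof.
rewrite /cond_entropy /unif_expect.
apply: (le_trans (y := \sum_(w : Omega n d) (\sum_k ((ind n d k w)%:R : R)) / #|Omega n d|%:R)).
  apply: ler_sum => w _; apply: ler_wpM2r; first by rewrite invr_ge0 ler0n.
  rewrite ratio sum_ind_card; apply: log_bound; last exact: Nbound.
  by apply/card_gt0P; exists w; rewrite inE.
rewrite (eq_bigr (fun w => \sum_k ((ind n d k w)%:R / #|Omega n d|%:R))); last first.
  by move=> w _; rewrite mulr_suml.
rewrite exchange_big /= (eq_bigr (fun k => \sum_(w : Omega n d) ((2%:R^-1)^+norm0 (Bv w) / #|Omega n d|%:R : R))); last first.
  by move=> k _; rewrite -!mulr_suml sum_ind.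
by rewrite sumr_const card_ord mulr_natl.
Qed.
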